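(* In the high-dimensional setting below, assume $\epsilon_{I,j}\ne0$ for all $j$. If for some constant $c>1$ the penalty levels satisfy $$\lambda\gamma\ge\frac{c+1}{c-1}\max_{j\in[p]}\frac{\|(X^{(n)}_{I,j^c})^\top\epsilon_{I,j}\|_\infty}{\|\epsilon_{I,j}\|_2}\quad\text{and}\quad\lambda\ge\frac{c+1}{c-1}\max_{i\in[n]}\Big(\sum_{j\in[p]}\frac{\epsilon_{ij}^2}{\|\epsilon_{I,j}\|_2^2}\Big)^{1/2},$$ then $\widehat\Delta\in\mathscr C_{\mathcal J,O}(c,\gamma)$.
   Context: High-dimensional setting. Let $n,p\ge1$, $[n]=\{1,\dots,n\}$. $X=Y+E^*\in\mathbb R^{n\times p}$ where (C1) the rows of $Y$ are independent $\mathcal N_p(\mu^*,\Sigma^* )$, $\Sigma^*$ positive definite; (C2) $E^*$ is deterministic, $[n]=I\cup O$ a partition with the rows of $E^*$ indexed by $I$ equal to zero, and every row of $E^*(\Sigma^* )^{-1/2}$ of Euclidean norm at most $M_E\sqrt p$; $\mu^*=0$. $\Omega^*=(\Sigma^* )^{-1}$ with diagonal entries $\omega^*_{jj}$, $B^*=\Omega^*\mathrm{diag}(\Omega^* )^{-1}$, $X^{(n)}=X/\sqrt n$, $\Theta^*=E^*B^*/\sqrt n$, $\xi=X^{(n)}B^*-\Theta^*$, and $\epsilon\in\mathbb R^{n\times p}$ with $\epsilon_{ij}=\sqrt n(\omega^*_{jj})^{1/2}\xi_{ij}$. Notation: $A_{i,\bullet}$, $A_{\bullet,j}$ rows/columns,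 $A_{K,J}$ submatrices, $j^c=[p]\setminus\{j\}$, $\|A\|_{q_1,q_2}=(\sum_i\|A_{i,\bullet}\|_{q_1}^{q_2})^{1/q_2}$, $\|A^\top\|_{2,1}=\sum_j\|A_{\bullet,j}\|_2$. Estimator: for $\lambda,\gamma\ge0$, $(\widehat B,\widehat\Theta)$ minimizes $F(B,\Theta)=\|(X^{(n)}B-\Theta)^\top\|_{2,1}+\lambda(\|\Theta\|_{2,1}+\gamma\|B\|_{1,1})$ over $B\in\mathbb R^{p\times p}$ with all $B_{jj}=1$ and $\Theta\in\mathbb R^{n\times p}$. Let $\mathcal J=\{J_j:j\in[p]\}$, $J_j\subset[p]$, be such that $B^*_{i,j}=0$ whenever $i\notin J_j$; for a $p\times p$ matrix $A$, $A_{\mathcal J}$ is obtained by zeroing entries $A_{i,j}$ with $i\notin J_j$, and $A_{\mathcal J^c}=A-A_{\mathcal J}$. $\xi_O$ is the $n\times p$ matrix equal to $\xi$ on the rows indexed by $O$ and zero elsewhere; $\bar\Theta^*=\Theta^*+\xi_O$. $\widehat\Delta^B=\widehat B-B^*$, $\widehat\Delta^\Theta=\widehat\Theta-\bar\Theta^*$, and $\widehat\Delta\in\mathbb R^{(p+n)\times p}$ is the matrix obtained by stacking $\widehat\Delta^B$ above $\widehat\Delta^\Theta$. For $\Delta\in\mathbb R^{(p+n)\times p}$ write $\Delta^B=\Delta_{1:p,\bullet}$, $\Delta^\Theta=\Delta_{(p+1):(p+n),\bullet}$; cone: $\mathscr C_{\mathcal J,O}(c,\gamma)=\{\Delta:\gamma\|\Delta^B_{\mathcal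 J^c}\|_{1,1}+\|\Delta^\Theta_{O^c,\bullet}\|_{2,1}\le c(\gamma\|\Delta^B_{\mathcal J}\|_{1,1}+\|\Delta^\Theta_{O,\bullet}\|_{2,1})\}$, with $O^c=I$. *)

(* Defs.v *)
From HB Require Import structures.
From mathcomp Require Import all_boot all_order all_algebra.
Set Implicit Arguments. Unset Strict Implicit. Unset Printing Implicit Defensive.
Import Order.TTheory GRing.Theory Num.Theory.
Local Open Scope ring_scope.

Section Norms.
Variable R : rcfType.

Definition rownorm2 {m k} (A : 'M[R]_(m, k)) (i : 'I_m) : R :=
  Num.sqrt (\sum_(j < k) A i j ^+ 2).

Definition colnorm2 {m k} (A : 'M[R]_(m, k)) (j : 'I_k) : R :=
  Num.sqrt (\sum_(i < m) A i j ^+ 2).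

Definition norm21 {m k} (A : 'M[R]_(m, k)) : R := \sum_(i < m) rownorm2 A i.

Definition normT21 {m k} (A : 'M[R]_(m, k)) : R := \sum_(j < k) colnorm2 A j.

Definition norm11 {m k} (A : 'M[R]_(m, k)) : R := \sum_(i < m) \sum_(j < k) `|A i j|.

Definition norm21_on {m k} (K : {set 'I_m}) (A : 'M[R]_(m, k)) : R :=
  \sum_(i in K) rownorm2 A i.

Definition restrJ {p} (J : 'I_p -> {set 'I_p}) (A : 'M[R]_(p, p)) : 'M[R]_(p, p) :=
  \matrix_(i, j) (if i \in J j then A i j else 0).
Definition restrJc {p} (J : 'I_p -> {set 'I_p}) (A : 'M[R]_(p, p)) : 'M[R]_(p, p) :=
  A - restrJ J A.

Definition rowsOn {m k} (K : {set 'I_m}) (A : 'M[R]_(m, k)) : 'M[R]_(m, k) :=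
  \matrix_(i, j) (if i \in K then A i j else 0).

Definition posdef {p} (S : 'M[R]_p) : Prop :=
  S^T = S /\ forall v : 'rV[R]_p, v != 0 -> 0 < (v *m S *m v^T) 0 0.

Definition Fobj {n p} (Xn : 'M[R]_(n, p)) (lam gam : R)
  (B : 'M[R]_(p, p)) (Th : 'M[R]_(n, p)) : R :=
  normT21 (Xn *m B - Th) + lam * (norm21 Th + gam * norm11 B).

(* The cone C_{J,O}(c, gamma), with O^c = I; Delta is (p+n) x p *)
Definition cone {n p} (J : 'I_p -> {set 'I_p}) (O : {set 'I_n}) (c gam : R)
  (D : 'M[R]_(p + n, p)) : Prop :=
  let DB := usubmx D in let DT := dsubmx D in
  gam * norm11 (restrJc J DB) + norm21_on (~: O) DT
    <= c * (gam * norm11 (restrJ J DB) + norm21_on O DT).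

End Norms.

(* Main.v *)
Require Import Defs.
From HB Require Import structures.
From mathcomp Require Import all_boot all_order all_algebra.
From mathcomp Require Import ring lra.
Import Order.TTheory GRing.Theory Num.Theory.
Local Open Scope ring_scope.

Definition nrm {R : rcfType} {T : finType} (f : T -> R) := Num.sqrt (\sum_i f i ^+ 2).

Section Vec.
Variables (R : rcfType) (T : finType).
Implicit Types f g : T -> R.

Lemma nrm_ge0 f : 0 <= nrm f.
Proof. exact: sqrtr_ge0. Qed.

Lemma sumsq_ge0 f : 0 <= \sum_i f i ^+ 2.
Proof. by apply: sumr_ge0 => i _; rewrite sqr_ge0. Qed.

Lemma CS f g : \sum_i f i * g i <= nrm f * nrm g.
Proof.
set A := \sum_i f i ^+ 2; set B := \sum_i g i ^+ 2; set C := \sum_i f i * g i.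
have A0 : 0 <= A by exact: sumsq_ge0.
have B0 : 0 <= B by exact: sumsq_ge0.
have key : C ^+ 2 <= A * B.
  have [Az|Apos] := eqVneq A 0.
    have fz : forall i, f i = 0.
      move=> i; apply/eqP; rewrite -sqrf_eq0; apply/eqP.
      by move/eqP: Az; rewrite psumr_eq0 => [/allP/(_ i (mem_index_enum i))/implyP/(_ isT)/eqP|j _]; last by rewrite sqr_ge0.
    have -> : C = 0 by rewrite /C big1 // => i _; rewrite fz mul0r.
    by rewrite expr0n /= mulr_ge0.
  have Ap : 0 < A by rewrite lt_def Apos A0.
  have H : forall t, 0 <= t ^+ 2 * A - 2 * t * C + B.
    move=> t.
    have -> : t ^+ 2 * A - 2 * t * C + B = \sum_i (f i * t - g i) ^+ 2.
      rewrite /A /B /C mulr_sumr mulr_sumr -sumrB -big_split /=.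
      by apply: eq_bigr => i _; ring.
    exact: sumsq_ge0.
  have := H (C / A).
  have -> : (C / A) ^+ 2 * A - 2 * (C / A) * C + B = (A * B - C ^+ 2) / A.
    by field; rewrite Apos.
  by rewrite pmulr_lge0 ?invr_gt0 // subr_ge0.
have : C <= `|C| by exact: ler_norm.
move=> /le_trans; apply.
rewrite -sqrtr_sqr /nrm -sqrtrM //.
by rewrite ler_sqrt // mulr_ge0.
Qed.

Lemma nrm_tri f g : nrm (fun i => f i + g i) <= nrm f + nrm g.
Proof.
have -> : nrm f + nrm g = Num.sqrt ((nrm f + nrm g) ^+ 2).
  by rewrite sqrtr_sqr ger0_norm // addr_ge0 ?nrm_ge0.
rewrite /nrm ler_sqrt ?sqr_ge0 //.
have E : \sum_i (f i + g i) ^+ 2 = \sum_i f i ^+ 2 + 2 * \sum_i f i * g i + \sum_i g i ^+ 2.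
  rewrite mulr_sumr -!big_split /=; apply: eq_bigr => i _; ring.
rewrite E sqrrD !sqr_sqrtr ?sumsq_ge0 //.
have := CS f g; rewrite /nrm => H.
rewrite lerD2r lerD2l mulr_natl lerMn2r //=; exact: H.
Qed.

Lemma nrm_conv (a v : T -> R) : 0 < nrm a ->
  nrm a + (\sum_i a i * v i) / nrm a <= nrm (fun i => a i + v i).
Proof.
move=> ap.
have E : nrm a + (\sum_i a i * v i) / nrm a = (\sum_i a i * (a i + v i)) / nrm a.
  have -> : \sum_i a i * (a i + v i) = nrm a ^+ 2 + \sum_i a i * v i.
    rewrite sqr_sqrtr ?sumsq_ge0 // -big_split /=; apply: eq_bigr => i _; ring.
  by field; rewrite gt_eqF.
rewrite E ler_pdivrMr // mulrC; exact: CS.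
Qed.

Lemma nrm_opp f : nrm (fun i => - f i) = nrm f.
Proof. by rewrite /nrm; congr Num.sqrt; apply: eq_bigr => i _; rewrite sqrrN. Qed.

Lemma nrm_scale (k : R) f : 0 <= k -> nrm (fun i => k * f i) = k * nrm f.
Proof.
move=> k0; rewrite /nrm.
have -> : \sum_i (k * f i) ^+ 2 = k ^+ 2 * \sum_i f i ^+ 2.
  by rewrite mulr_sumr; apply: eq_bigr => i _; rewrite exprMn.
by rewrite sqrtrM ?sqr_ge0 // sqrtr_sqr ger0_norm.
Qed.

Lemma nrm_gt0 f i0 : f i0 != 0 -> 0 < nrm f.
Proof.
move=> h; rewrite /nrm sqrtr_gt0.
rewrite (bigD1 i0) //=; apply: lt_le_trans (_ : f i0 ^+ 2 <= _).
  by rewrite exprn_even_gt0 //.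
by rewrite lerDl; apply: sumr_ge0 => i _; rewrite sqr_ge0.
Qed.

End Vec.

Lemma le_bigmax0 (R : rcfType) (I : finType) (P : pred I) (F : I -> R) i0 :
  P i0 -> F i0 <= \big[Num.max/0]_(i | P i) F i.
Proof. by move=> Pi; rewrite (bigD1 i0) //= le_max lexx. Qed.

Lemma sum2_le (R : rcfType) (m k : nat) (f g h e : 'I_m -> 'I_k -> R) :
  (forall i j, h i j - e i j <= f i j - g i j) ->
  \sum_i \sum_j h i j - \sum_i \sum_j e i j <= \sum_i \sum_j f i j - \sum_i \sum_j g i j.
Proof.
move=> H; rewrite -!sumrB; apply: ler_sum => i _; rewrite -!sumrB; apply: ler_sum => j _; exact: H.
Qed.

Lemma final_alg (R : rcfType) (K lam gam c T1 T2 dT dB nI nO nJ nJc : R) :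
  1 < c -> K * (c - 1) = c + 1 -> 0 < lam -> 0 <= gam ->
  0 <= nO -> 0 <= nJ ->
  K * (- T1) <= lam * gam * (nJ + nJc) -> K * T2 <= lam * nI ->
  nI - nO <= dT -> nJc - nJ <= dB ->
  T1 - T2 + lam * (dT + gam * dB) <= 0 ->
  gam * nJc + nI <= c * (gam * nJ + nO).
Proof.
move=> c1 HK l0 g0 nO0 nJ0 H1 H2 H3 H4 H5.
have K0 : 0 < K.
  have : 0 < K * (c - 1) by rewrite HK; lra.
  by rewrite pmulr_lgt0 // subr_gt0.
set a := gam * nJc + nI; set b := gam * nJ + nO.
have S1 : lam * (nI - nO + gam * (nJc - nJ)) <= lam * (dT + gam * dB).
  by rewrite ler_pM2l // lerD // ler_wpM2l.
have S2 : K * (lam * (a - b)) <= lam * (a + b).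
  have -> : lam * (a - b) = lam * (nI - nO + gam * (nJc - nJ)) by rewrite /a /b; ring.
  apply: le_trans (_ : K * (lam * (dT + gam * dB)) <= _).
    by rewrite ler_pM2l.
  have : K * (T1 - T2 + lam * (dT + gam * dB)) <= 0 by rewrite pmulr_rle0.
  have : lam * gam * (nJ + nJc) + lam * nI <= lam * (a + b).
    rewrite /a /b; have : 0 <= lam * nO by rewrite mulr_ge0 // ltW.
    have : 0 <= lam * gam * nJ by rewrite !mulr_ge0 // ltW.
    move=> *; lra.
  move=> *; nra.
have S3 : K * (a - b) <= a + b.
  by move: S2; rewrite mulrCA ler_pM2l.
have S4 : (c + 1) * (a - b) <= (c - 1) * (a + b).
  have := ler_wpM2l (_ : 0 <= c - 1) S3; rewrite mulrA (mulrC (c - 1)) HK; apply; lra.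
nra.
Qed.

Lemma zid (V : zmodType) (a b c d : V) : a - c = (b - d) + ((a - b) - (c - d)).
Proof. by rewrite opprB addrACA addKr (addrC b) subrK. Qed.

Lemma matE_sub (R : rcfType) m k (A B : 'M[R]_(m, k)) i j : (A - B) i j = A i j - B i j.
Proof. by rewrite !mxE. Qed.
Lemma matE_add (R : rcfType) m k (A B : 'M[R]_(m, k)) i j : (A + B) i j = A i j + B i j.
Proof. by rewrite !mxE. Qed.

Lemma eq_nrm (R : rcfType) (T : finType) (f g : T -> R) : (forall i, f i = g i) -> nrm f = nrm g.
Proof. by move=> H; rewrite /nrm; congr Num.sqrt; apply: eq_bigr => i _; rewrite H. Qed.

Lemma nrm0 (R : rcfType) (T : finType) : nrm (fun _ : T => 0 : R) = 0.
Proof. by rewrite /nrm big1 ?sqrtr0 // => i _; rewrite expr0n. Qed.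

Lemma rowsOnC (R : rcfType) m k (K : {set 'I_m}) (A : 'M[R]_(m, k)) :
  rowsOn K A = A - rowsOn (~: K) A.
Proof.
apply/matrixP => i j; rewrite !mxE in_setC; case: (i \in K) => /=; by rewrite ?subr0 ?subrr.
Qed.

Theorem mainTheorem16 (R : rcfType) (n p : nat)
  (Sigma : 'M[R]_p) (E X : 'M[R]_(n, p)) (I : {set 'I_n}) (ME : R)
  (J : 'I_p -> {set 'I_p}) (lam gam c : R)
  (Bh : 'M[R]_(p, p)) (Thh : 'M[R]_(n, p)) :
  (0 < n)%N -> (0 < p)%N ->
  posdef Sigma ->
  (forall i, i \in I -> forall j, E i j = 0) ->
  (forall i : 'I_n, Num.sqrt ((row i E *m invmx Sigma *m (row i E)^T) 0 0)
                      <= ME * Num.sqrt p%:R) ->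
  let O := ~: I in
  let Omega := invmx Sigma in
  let sn := Num.sqrt n%:R in
  let Bstar := Omega *m invmx (diag_mx (\row_j Omega j j)) in
  let Xn := sn^-1 *: X in
  let Thstar := sn^-1 *: (E *m Bstar) in
  let xi := Xn *m Bstar - Thstar in
  let eps := \matrix_(i, j) (sn * Num.sqrt (Omega j j) * xi i j) in
  let epsInorm := fun j : 'I_p => Num.sqrt (\sum_(i in I) eps i j ^+ 2) in
  let Thbar := Thstar + rowsOn O xi in
  (forall i j, i \notin J j -> Bstar i j = 0) ->
  (forall j, exists2 i, i \in I & eps i j != 0) ->
  0 <= lam -> 0 <= gam ->
  (forall j, Bh j j = 1) ->
  (forall (B : 'M[R]_(p, p)) (Th : 'M[R]_(n, p)), (forall j, B j j = 1) ->
      Fobj Xn lam gam Bh Thh <= Fobj Xn lam gam B Th) ->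
  1 < c ->
  lam * gam >= (c + 1) / (c - 1) *
     \big[Num.max/0]_(j < p)
        ((\big[Num.max/0]_(k < p | k != j) `|\sum_(i in I) Xn i k * eps i j|)
          / epsInorm j) ->
  lam >= (c + 1) / (c - 1) *
     \big[Num.max/0]_(i < n)
        Num.sqrt (\sum_(j < p) eps i j ^+ 2 / epsInorm j ^+ 2) ->
  cone J O c gam (col_mx (Bh - Bstar) (Thh - Thbar)).
Proof.
move=> n0 p0 _ EI _ O Omega sn Bstar Xn Thstar xi eps epsInorm Thbar
  HJ Heps lam0 gam0 Bh1 Hmin c1 Hlg Hl.
have sn0 : 0 < sn by rewrite /sn sqrtr_gt0 ltr0n.
have epsE : forall i j, eps i j = sn * Num.sqrt (Omega j j) * xi i j.
  by move=> i j; rewrite /eps mxE.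
pose kap := fun j => sn * Num.sqrt (Omega j j).
have sq0 : forall j, Num.sqrt (Omega j j) != 0.
  move=> j; case: (Heps j) => i _; rewrite epsE; apply: contraNneq => ->.
  by rewrite mulr0 mul0r.
have kap0 : forall j, 0 < kap j.
  by move=> j; rewrite /kap mulr_gt0 // lt_def sq0 sqrtr_ge0.
have Om0 : forall j, Omega j j != 0.
  by move=> j; apply: contra (sq0 j) => /eqP ->; rewrite sqrtr0.
have invD : invmx (diag_mx (\row_j Omega j j)) = diag_mx (\row_j (Omega j j)^-1).
  have DD : diag_mx (\row_j Omega j j) *m diag_mx (\row_j (Omega j j)^-1) = 1%:M.
    apply/matrixP => i j; rewrite mul_diag_mx !mxE.
    case: eqVneq => [->|ne] /=; first by rewrite mulr1n divff.
    by rewrite mulr0n mulr0.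
  have [U _] := mulmx1_unit DD.
  by rewrite -[RHS](mulKmx U) DD mulmx1.
have BsE : forall i j, Bstar i j = Omega i j / Omega j j.
  by move=> i j; rewrite /Bstar invD mul_mx_diag !mxE.
have Bs1 : forall j, Bstar j j = 1 by move=> j; rewrite BsE divff.
have ThI : forall i j, i \in I -> Thbar i j = 0.
  move=> i j iI; rewrite /Thbar matE_add /rowsOn /O [X in _ + X]mxE in_setC iI /= addr0.
  rewrite /Thstar mxE mxE big1 ?mulr0 // => k _; by rewrite EI // mul0r.
have resE : Xn *m Bstar - Thbar = rowsOn I xi.
  by rewrite rowsOnC /Thbar opprD addrA.
pose DB := Bh - Bstar. pose DT := Thh - Thbar.
pose V := Xn *m DB - DT.
have resH : Xn *m Bh - Thh = rowsOn I xi + V.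
  by rewrite -resE /V /DB /DT mulmxBr -zid.
have sE : forall j, epsInorm j = nrm (fun i => if i \in I then eps i j else 0).
  move=> j; rewrite /epsInorm /nrm big_mkcond; congr Num.sqrt; apply: eq_bigr => i _.
  by case: (i \in I); rewrite ?expr0n.
have s0 : forall j, 0 < epsInorm j.
  move=> j; case: (Heps j) => i iI ne; rewrite sE; apply: (@nrm_gt0 _ _ _ i).
  by rewrite iI.
have colE : forall j, epsInorm j = kap j * colnorm2 (rowsOn I xi) j.
  move=> j; rewrite sE -nrm_scale ?ltW //; apply: eq_nrm => i.
  by rewrite /rowsOn [X in _ = _ * X]mxE epsE; case: (i \in I); rewrite ?mulr0.
pose u := fun i j => (if i \in I then eps i j else 0) / epsInorm j.
have colH : forall j, colnorm2 (rowsOn I xi) j + \sum_i u i j * V i j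
                      <= colnorm2 (rowsOn I xi + V) j.
  move=> j.
  have a0 : 0 < colnorm2 (rowsOn I xi) j.
    by have := s0 j; rewrite colE pmulr_rgt0.
  have := @nrm_conv _ _ (fun i => rowsOn I xi i j) (fun i => V i j) a0.
  have -> : nrm (fun i => rowsOn I xi i j + V i j) = colnorm2 (rowsOn I xi + V) j.
    rewrite (_ : colnorm2 (rowsOn I xi + V) j = nrm (fun i => (rowsOn I xi + V) i j)) //.
    by apply: eq_nrm => i; rewrite matE_add.
  congr (_ + _ <= _); rewrite mulr_suml; apply: eq_bigr => i _.
  rewrite /u colE [rowsOn I xi i j]mxE epsE -/(kap j).
  change (nrm _) with (colnorm2 (rowsOn I xi) j).
  have := kap0 j; have := a0; case: (i \in I) => ? ? /=; field;
    by rewrite ?gt_eqF.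
pose T1 := \sum_j \sum_i u i j * (Xn *m DB) i j.
pose T2 := \sum_j \sum_i u i j * DT i j.
have colsum : normT21 (rowsOn I xi) + (T1 - T2) <= normT21 (rowsOn I xi + V).
  rewrite /normT21; apply: le_trans (_ : \sum_j (colnorm2 (rowsOn I xi) j + \sum_i u i j * V i j) <= _); last first.
    by apply: ler_sum => j _; exact: colH.
  rewrite big_split /=; apply: lerD (lexx _) _.
  rewrite /T1 /T2 -sumrB; apply: ler_sum => j _; rewrite -sumrB; apply: ler_sum => i _.
  by rewrite /V (@matE_sub R n p (Xn *m DB) DT) mulrBr.
have c0 : 0 < c - 1 by rewrite subr_gt0.
pose K := (c + 1) / (c - 1).
have K0 : 0 < K by rewrite /K divr_gt0 //; lra.
have HK : K * (c - 1) = c + 1 by rewrite /K divfK // gt_eqF.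
pose Gmax := \big[Num.max/0]_(j < p)
        ((\big[Num.max/0]_(k < p | k != j) `|\sum_(i in I) Xn i k * eps i j|) / epsInorm j).
pose Hmax := \big[Num.max/0]_(i < n) Num.sqrt (\sum_(j < p) eps i j ^+ 2 / epsInorm j ^+ 2).
have DBjj : forall j, DB j j = 0 by move=> j; rewrite /DB matE_sub Bh1 Bs1 subrr.
have rJ : forall i j, restrJ J DB i j = if i \in J j then DB i j else 0.
  by move=> i j; rewrite /restrJ mxE.
have rJc : forall i j, restrJc J DB i j = if i \in J j then 0 else DB i j.
  by move=> i j; rewrite /restrJc matE_sub rJ; case: ifP; rewrite ?subrr ?subr0.
have n11E : norm11 DB = norm11 (restrJ J DB) + norm11 (restrJc J DB).
  rewrite /norm11 -big_split; apply: eq_bigr => i _; rewrite -big_split; apply: eq_bigr => j _ /=.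
  by rewrite rJ rJc; case: ifP; rewrite normr0 ?addr0 ?add0r.
have n11_ge0 : forall m k (A : 'M[R]_(m, k)), 0 <= norm11 A.
  by move=> m k A; apply: sumr_ge0 => i _; apply: sumr_ge0 => j _; exact: normr_ge0.
have n21_ge0 : forall m k (S : {set 'I_m}) (A : 'M[R]_(m, k)), 0 <= norm21_on S A.
  by move=> m k S A; apply: sumr_ge0 => i _; exact: sqrtr_ge0.
have T1b : K * (- T1) <= lam * gam * (norm11 (restrJ J DB) + norm11 (restrJc J DB)).
  rewrite -n11E.
  have h1 : - T1 <= Gmax * norm11 DB.
    apply: le_trans (ler_norm _) _; rewrite normrN.
    apply: le_trans (ler_norm_sum _ _ _) _.
    rewrite /norm11 exchange_big /= mulr_sumr; apply: ler_sum => j _.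
    have -> : \sum_i u i j * (Xn *m DB) i j = \sum_k DB k j * \sum_i Xn i k * u i j.
      rewrite (eq_bigr (fun i => \sum_k u i j * (Xn i k * DB k j))); last first.
        by move=> i _; rewrite [(Xn *m DB) i j]mxE mulr_sumr.
      rewrite exchange_big; apply: eq_bigr => k _; rewrite mulr_sumr; apply: eq_bigr => i _.
      ring.
    apply: le_trans (ler_norm_sum _ _ _) _; rewrite mulr_sumr; apply: ler_sum => k _.
    rewrite normrM mulrC; have [->|ne] := eqVneq k j.
      by rewrite DBjj normr0 !mulr0.
    apply: (ler_wpM2r (normr_ge0 _)).
    have -> : \sum_i Xn i k * u i j = (\sum_(i in I) Xn i k * eps i j) / epsInorm j.
      rewrite [X in _ = X / _]big_mkcond mulr_suml; apply: eq_bigr => i _; rewrite /u.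
      by case: (i \in I) => /=; ring.
    rewrite normrM normfV (ger0_norm (ltW (s0 j))).
    apply: le_trans (_ : (\big[Num.max/0]_(k < p | k != j) `|\sum_(i in I) Xn i k * eps i j|) / epsInorm j <= _); last first.
      exact: le_bigmax0.
    rewrite ler_pM2r ?invr_gt0 //.
    exact: (@le_bigmax0 _ _ (fun k0 : 'I_p => k0 != j) _ _ ne).
  apply: le_trans (ler_wpM2l (ltW K0) h1) _; rewrite mulrA; apply: ler_wpM2r; [exact: n11_ge0 | exact: Hlg].
have T2b : K * T2 <= lam * norm21_on I DT.
  have h2 : T2 <= Hmax * norm21_on I DT.
    rewrite /T2 exchange_big /norm21_on mulr_sumr [X in _ <= X]big_mkcond /=; apply: ler_sum => i _.
    case: ifP => iI.
      apply: le_trans (@CS _ _ (fun j => u i j) (fun j => DT i j)) _.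
      change (rownorm2 DT i) with (nrm (fun j => DT i j)).
      apply: (ler_wpM2r (nrm_ge0 _ _ _)).
      apply: le_trans (_ : Num.sqrt (\sum_j eps i j ^+ 2 / epsInorm j ^+ 2) <= _); last first.
        exact: le_bigmax0.
      rewrite le_eqVlt; apply/orP; left; apply/eqP; congr Num.sqrt; apply: eq_bigr => j _.
      by rewrite /u iI expr_div_n.
    by rewrite big1 // => j _; rewrite /u iI !mul0r.
  apply: le_trans (ler_wpM2l (ltW K0) h2) _; rewrite mulrA; apply: ler_wpM2r; [exact: n21_ge0 | exact: Hl].
have split21 : forall (S : {set 'I_n}) (f : 'I_n -> R),
    \sum_(i in S) f i = \sum_i (if i \in S then f i else 0).
  by move=> S f; rewrite big_mkcond.
have dTb : norm21_on I DT - norm21_on (~: I) DT <= norm21 Thh - norm21 Thbar.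
  rewrite /norm21 /norm21_on !split21 -!sumrB; apply: ler_sum => i _; rewrite in_setC.
  have ThE : forall j, Thbar i j = Thh i j - DT i j.
    by move=> j; rewrite /DT matE_sub; ring.
  case: ifP => iI /=.
    have -> : rownorm2 Thbar i = 0.
      change (rownorm2 Thbar i) with (nrm (fun j => Thbar i j)).
      by rewrite (@eq_nrm _ _ _ (fun _ => 0)) ?nrm0 // => j; exact: ThI.
    have -> : rownorm2 Thh i = rownorm2 DT i.
      change (nrm (fun j => Thh i j) = nrm (fun j => DT i j)).
      by apply: eq_nrm => j; rewrite /DT matE_sub ThI // subr0.
    by rewrite !subr0.
  have := @nrm_tri _ _ (fun j => Thh i j) (fun j => - DT i j).
  rewrite nrm_opp (@eq_nrm _ _ _ (fun j => Thbar i j)); last by move=> j; rewrite ThE.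
  change (nrm (fun j => Thbar i j)) with (rownorm2 Thbar i).
  change (nrm (fun j => Thh i j)) with (rownorm2 Thh i).
  change (nrm (fun j => DT i j)) with (rownorm2 DT i).
  move=> h; have e : nrm (DT i) = rownorm2 DT i by [].
  rewrite e in h; lra.
have dBb : norm11 (restrJc J DB) - norm11 (restrJ J DB) <= norm11 Bh - norm11 Bstar.
  rewrite /norm11; apply: sum2_le => i j; rewrite rJ rJc; case: ifP => iJ.
    have := ler_normB (Bh i j) (DB i j).
    rewrite (_ : Bh i j - DB i j = Bstar i j); last by rewrite /DB matE_sub; ring.
    rewrite normr0 => h; lra.
  by rewrite /DB matE_sub (HJ i j (negbT iJ)) subr0 !normr0 !subr0.
have HF := Hmin Bstar Thbar Bs1.
rewrite /Fobj resH resE in HF.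
have Hpos : 0 < Hmax.
  pose j0 : 'I_p := Ordinal p0.
  case: (Heps j0) => i0 i0I ne.
  apply: lt_le_trans (_ : Num.sqrt (\sum_j eps i0 j ^+ 2 / epsInorm j ^+ 2) <= _); last first.
    exact: le_bigmax0.
  rewrite (eq_bigr (fun j => (eps i0 j / epsInorm j) ^+ 2)); last by move=> j _; rewrite expr_div_n.
  have sj0 : epsInorm j0 != 0 by rewrite gt_eqF.
  exact: (@nrm_gt0 _ _ (fun j => eps i0 j / epsInorm j) j0 (mulf_neq0 ne (invr_neq0 sj0))).
have lam_pos : 0 < lam by apply: lt_le_trans Hl; exact: mulr_gt0.
have Fin : T1 - T2 + lam * ((norm21 Thh - norm21 Thbar) + gam * (norm11 Bh - norm11 Bstar)) <= 0.
  move: HF colsum; move: (normT21 _) (normT21 _) => a b HF cs.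
  nra.
rewrite /cone col_mxKu col_mxKd /O setCK /=.
exact: (@final_alg R _ _ _ _ _ _ _ _ _ _ _ _ c1 HK lam_pos gam0 (n21_ge0 _ _ _ _) (n11_ge0 _ _ _) T1b T2b dTb dBb Fin).
Qed.
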